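(* Let $b(r)$ be a smooth positive function on an open interval of $r>0$ and consider the metric $ds^2=-b^2dt^2+b^{-2}dr^2+r^2(d\theta^2+\sin^2\theta\,d\phi^2)$. Let $\kappa_1,\kappa_2,q$ be constants, set $\Lambda=-\kappa_1$, $\lambda=-\kappa_2$, and let $$K_{kl}=\kappa_2r^2\,u_ku_l+(\kappa_1+2\kappa_2r^2)g_{kl}-\kappa_2r^2\,\chi_k\chi_l,\qquad T_{kl}=\frac{q^2}{r^4}\left(2u_ku_l-2\chi_k\chi_l+g_{kl}\right).$$ Then the conformal Killing gravity field equations $R_{kl}-\tfrac12Rg_{kl}=T_{kl}+K_{kl}$ hold if and only if there is a constant $M$ such that $$b^2(r)=1-\frac{2M}{r}-\frac{\Lambda}{3}r^2+\frac{q^2}{r^2}-\frac{\lambda}{5}r^4 .$$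
   Context: $u_k$ is the unit timelike covector with components $u_0=-b$ and all others zero; $\chi_k$ is the unit radial covector with $\chi_r=1/b$ and all others zero. $R_{kl}$ is the Ricci tensor and $R$ the scalar curvature. $T_{kl}$ is the stress-energy tensor of linear electrodynamics (Lagrangian $\mathscr L(F)=F$) with Coulomb electric field $\mathbb E=q_e/r^2$ and monopole magnetic field $\mathbb B=q_m/r^2$, $q^2=q_e^2+q_m^2$, i.e. $T_{kl}=2(\mathbb E^2+\mathbb B^2)(u_ku_l-\chi_k\chi_l)+(\mathbb E^2+\mathbb B^2)g_{kl}$. $K_{kl}$ is the divergence-free conformal Killing tensor $\mathsf Au_ku_l+\mathsf Bg_{kl}+\mathsf C\chi_k\chi_l$ with $\mathsf A=\kappa_2 r^2-2\kappa_3b^2$, $\mathsf B=\kappa_1+2\kappa_2r^2+\kappa_3b^2$, $\mathsf C=-\kappa_2r^2$, specialized to $\kappa_3=0$ (the case $h=bf_1=1$). *)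

(* Defs.v *)
From Stdlib Require Import Reals Lra.
From Coquelicot Require Import Coquelicot.
Open Scope R_scope.

(* A point of the coordinate chart: x 0 = t, x 1 = r, x 2 = theta, x 3 = phi. *)
Definition coord := nat -> R.

Definition upd (x : coord) (i : nat) (s : R) : coord :=
  fun j => if Nat.eqb j i then s else x j.

Definition pd (i : nat) (F : coord -> R) (x : coord) : R :=
  Derive (fun s => F (upd x i s)) (x i).

Definition sum4 (f : nat -> R) : R := f 0%nat + f 1%nat + f 2%nat + f 3%nat.

Definition tensor2 := nat -> nat -> coord -> R.

Definition christoffel (g ginv : tensor2) (k i j : nat) (x : coord) : R :=
  / 2 * sum4 (fun l => ginv k l x *
        (pd i (g j l) x + pd j (g i l) x - pd l (g i j) x)).

Definition ricci (g ginv : tensor2) (i j : nat) (x : coord) : R :=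
  sum4 (fun k =>
    pd k (christoffel g ginv k i j) x - pd j (christoffel g ginv k i k) x
    + sum4 (fun l => christoffel g ginv k k l x * christoffel g ginv l i j x
                     - christoffel g ginv k j l x * christoffel g ginv l i k x)).

Definition scalar_curv (g ginv : tensor2) (x : coord) : R :=
  sum4 (fun i => sum4 (fun j => ginv i j x * ricci g ginv i j x)).

Definition einstein (g ginv : tensor2) (i j : nat) (x : coord) : R :=
  ricci g ginv i j x - / 2 * scalar_curv g ginv x * g i j x.

Definition diag_metric (d : nat -> coord -> R) : tensor2 :=
  fun i j x => if Nat.eqb i j then d i x else 0.
Definition diag_metric_inv (d : nat -> coord -> R) : tensor2 :=
  fun i j x => if Nat.eqb i j then / d i x else 0.

Definition sss_diag (b : R -> R) (i : nat) (x : coord) : R :=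
  match i with
  | 0%nat => - (b (x 1%nat)) ^ 2
  | 1%nat => / (b (x 1%nat)) ^ 2
  | 2%nat => (x 1%nat) ^ 2
  | _ => (x 1%nat) ^ 2 * (sin (x 2%nat)) ^ 2
  end.

Definition gmet (b : R -> R) : tensor2 := diag_metric (sss_diag b).
Definition ginvmet (b : R -> R) : tensor2 := diag_metric_inv (sss_diag b).

(* unit timelike covector u_k (u_0 = -b) and unit radial covector chi_k (chi_r = 1/b) *)
Definition ucov (b : R -> R) (k : nat) (x : coord) : R :=
  if Nat.eqb k 0 then - b (x 1%nat) else 0.
Definition chicov (b : R -> R) (k : nat) (x : coord) : R :=
  if Nat.eqb k 1 then / b (x 1%nat) else 0.

Definition Tem (q : R) (b : R -> R) (k l : nat) (x : coord) : R :=
  q ^ 2 / (x 1%nat) ^ 4 *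
  (2 * ucov b k x * ucov b l x - 2 * chicov b k x * chicov b l x + gmet b k l x).

Definition Kckg (k1 k2 : R) (b : R -> R) (k l : nat) (x : coord) : R :=
  k2 * (x 1%nat) ^ 2 * ucov b k x * ucov b l x
  + (k1 + 2 * k2 * (x 1%nat) ^ 2) * gmet b k l x
  - k2 * (x 1%nat) ^ 2 * chicov b k x * chicov b l x.

(* Main.v *)
Require Import Defs.
From Stdlib Require Import Reals Lra Lia.
From Coquelicot Require Import Coquelicot.
Open Scope R_scope.

Definition Dom (a : R) (c : Rbar) (y : coord) : Prop :=
  a < y 1%nat /\ Rbar_lt (y 1%nat) c /\ 0 < y 2%nat < PI.

Definition Hyp (b : R -> R) (a : R) (c : Rbar) : Prop :=
  0 <= a /\ (forall r, a < r -> Rbar_lt r c -> 0 < b r) /\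
  (forall (n : nat) r, a < r -> Rbar_lt r c -> ex_derive_n b n r).

Definition dG (b : R -> R) (i j l : nat) (y : coord) : R :=
  let r := y 1%nat in let th := y 2%nat in
  match i, j, l with
  | 1%nat, 0%nat, 0%nat => -2 * b r * Derive b r
  | 1%nat, 1%nat, 1%nat => -2 * Derive b r / b r ^ 3
  | 1%nat, 2%nat, 2%nat => 2 * r
  | 1%nat, 3%nat, 3%nat => 2 * r * sin th ^ 2
  | 2%nat, 3%nat, 3%nat => 2 * r ^ 2 * sin th * cos th
  | _, _, _ => 0
  end.

Ltac fixeta b := repeat change (fun x : R => b x) with b;
   repeat change (fun x : R => Derive b x) with (Derive b).

Ltac side := repeat split; auto;
  repeat (apply Rmult_integral_contrapositive_currified); auto; try lra.

Ltac idx4 k := destruct k as [|[|[|[|k]]]]; [| | | | lia].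

Lemma pd_g b a c y : Hyp b a c -> Dom a c y -> forall i j l, (i < 4)%nat -> (j < 4)%nat -> (l < 4)%nat ->
  pd i (gmet b j l) y = dG b i j l y.
Proof.
  intros [Ha [Hpos Hder]] [H1 [H2 H3]] i j l Hi Hj Hl.
  assert (Hb : b (y 1%nat) <> 0) by (apply Rgt_not_eq, Hpos; auto).
  assert (Hd : ex_derive b (y 1%nat)) by exact (Hder 1%nat _ H1 H2).
  idx4 i; idx4 j; idx4 l;
  unfold pd, gmet, diag_metric, sss_diag, upd, dG; simpl;
  apply is_derive_unique; auto_derive; fixeta b; try side; try field; auto.
Qed.


Definition Gam (b : R -> R) (k i j : nat) (y : coord) : R :=
  let r := y 1%nat in let th := y 2%nat in
  match k, i, j with
  | 0%nat, 0%nat, 1%nat | 0%nat, 1%nat, 0%nat => Derive b r / b r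
  | 1%nat, 0%nat, 0%nat => b r ^ 3 * Derive b r
  | 1%nat, 1%nat, 1%nat => - Derive b r / b r
  | 1%nat, 2%nat, 2%nat => - r * b r ^ 2
  | 1%nat, 3%nat, 3%nat => - r * b r ^ 2 * sin th ^ 2
  | 2%nat, 1%nat, 2%nat | 2%nat, 2%nat, 1%nat => / r
  | 2%nat, 3%nat, 3%nat => - sin th * cos th
  | 3%nat, 1%nat, 3%nat | 3%nat, 3%nat, 1%nat => / r
  | 3%nat, 2%nat, 3%nat | 3%nat, 3%nat, 2%nat => cos th / sin th
  | _, _, _ => 0
  end.

Lemma nz_facts b a c y : Hyp b a c -> Dom a c y ->
  b (y 1%nat) <> 0 /\ y 1%nat <> 0 /\ sin (y 2%nat) <> 0.
Proof.
  intros [Ha [Hpos Hder]] [H1 [H2 H3]].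
  split; [apply Rgt_not_eq, Hpos; auto|]. split; [lra|].
  apply Rgt_not_eq, sin_gt_0; lra.
Qed.

Lemma chr b a c y : Hyp b a c -> Dom a c y -> forall k i j, (k < 4)%nat -> (i < 4)%nat -> (j < 4)%nat ->
  christoffel (gmet b) (ginvmet b) k i j y = Gam b k i j y.
Proof.
  intros HH HD k i j Hk Hi Hj.
  destruct (nz_facts b a c y HH HD) as [Hb [Hr Hs]].
  unfold christoffel, sum4.
  rewrite !(pd_g b a c y HH HD) by lia.
  idx4 k; idx4 i; idx4 j;
  unfold ginvmet, diag_metric_inv, sss_diag, dG, Gam; simpl; field; auto.
Qed.

Lemma Dom_loc a c y : Dom a c y -> forall m, locally (y m) (fun s => Dom a c (upd y m s)).
Proof.
  intros [H1 [H2 H3]] m.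
  destruct m as [|[|[|m]]].
  - apply filter_forall; intros s; unfold Dom, upd; simpl; tauto.
  - eapply filter_imp; [| apply filter_and; [apply (open_gt a); exact H1 | exact (open_Rbar_lt' _ _ H2)]].
    intros s [Hs1 Hs2]; unfold Dom, upd; simpl; tauto.
  - eapply filter_imp; [| apply filter_and; [apply (open_gt 0); apply H3 | apply (open_lt PI); apply H3]].
    intros s [Hs1 Hs2]; unfold Dom, upd; simpl; tauto.
  - apply filter_forall; intros s; unfold Dom, upd; simpl; tauto.
Qed.

Definition dGam (b : R -> R) (m k i j : nat) (y : coord) : R :=
  let r := y 1%nat in let th := y 2%nat in
  let B := b r in let B1 := Derive b r in let B2 := Derive (Derive b) r in
  match m, k, i, j with
  | 1%nat, 0%nat, 0%nat, 1%nat | 1%nat, 0%nat, 1%nat, 0%nat => B2 / B - B1 ^ 2 / B ^ 2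
  | 1%nat, 1%nat, 0%nat, 0%nat => 3 * B ^ 2 * B1 ^ 2 + B ^ 3 * B2
  | 1%nat, 1%nat, 1%nat, 1%nat => - (B2 / B - B1 ^ 2 / B ^ 2)
  | 1%nat, 1%nat, 2%nat, 2%nat => - (B ^ 2 + 2 * r * B * B1)
  | 1%nat, 1%nat, 3%nat, 3%nat => - (B ^ 2 + 2 * r * B * B1) * sin th ^ 2
  | 1%nat, 2%nat, 1%nat, 2%nat | 1%nat, 2%nat, 2%nat, 1%nat
  | 1%nat, 3%nat, 1%nat, 3%nat | 1%nat, 3%nat, 3%nat, 1%nat => - / r ^ 2
  | 2%nat, 1%nat, 3%nat, 3%nat => - r * B ^ 2 * 2 * sin th * cos th
  | 2%nat, 2%nat, 3%nat, 3%nat => - (cos th ^ 2 - sin th ^ 2)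
  | 2%nat, 3%nat, 2%nat, 3%nat | 2%nat, 3%nat, 3%nat, 2%nat => - (sin th ^ 2 + cos th ^ 2) / sin th ^ 2
  | _, _, _, _ => 0
  end.

Lemma pd_chr b a c y : Hyp b a c -> Dom a c y -> forall m k i j,
  (m < 4)%nat -> (k < 4)%nat -> (i < 4)%nat -> (j < 4)%nat ->
  pd m (christoffel (gmet b) (ginvmet b) k i j) y = dGam b m k i j y.
Proof.
  intros HH HD m k i j Hm Hk Hi Hj.
  destruct (nz_facts b a c y HH HD) as [Hb [Hr Hs]].
  assert (Hd : ex_derive b (y 1%nat)) by (destruct HH as [_ [_ Hder]]; destruct HD as [H1 [H2 _]]; exact (Hder 1%nat _ H1 H2)).
  assert (Hd2 : ex_derive (Derive b) (y 1%nat)) by (destruct HH as [_ [_ Hder]]; destruct HD as [H1 [H2 _]]; exact (Hder 2%nat _ H1 H2)).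
  unfold pd.
  rewrite (Derive_ext_loc _ (fun s => Gam b k i j (upd y m s))).
  2: { eapply filter_imp; [| apply (Dom_loc a c y HD m)]. intros s Hs0. apply (chr b a c); auto. }
  idx4 m; idx4 k; idx4 i; idx4 j;
  unfold Gam, upd, dGam; simpl;
  apply is_derive_unique; auto_derive; fixeta b; try side; try field; auto.
Qed.

Definition Ric (b : R -> R) (i j : nat) (y : coord) : R :=
  let r := y 1%nat in let th := y 2%nat in
  let B := b r in let B1 := Derive b r in let B2 := Derive (Derive b) r in
  let P := B1 ^ 2 + B * B2 + 2 * B * B1 / r in
  match i, j with
  | 0%nat, 0%nat => B ^ 2 * P
  | 1%nat, 1%nat => - P / B ^ 2
  | 2%nat, 2%nat => 1 - B ^ 2 - 2 * r * B * B1
  | 3%nat, 3%nat => sin th ^ 2 * (1 - B ^ 2 - 2 * r * B * B1)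
  | _, _ => 0
  end.

Lemma ric b a c y : Hyp b a c -> Dom a c y -> forall i j, (i < 4)%nat -> (j < 4)%nat ->
  ricci (gmet b) (ginvmet b) i j y = Ric b i j y.
Proof.
  intros HH HD i j Hi Hj.
  destruct (nz_facts b a c y HH HD) as [Hb [Hr Hs]].
  unfold ricci, sum4.
  rewrite !(pd_chr b a c y HH HD) by lia.
  rewrite !(chr b a c y HH HD) by lia.
  idx4 i; idx4 j; unfold Gam, dGam, Ric; simpl; try field; auto.
Qed.

Definition Ein (b : R -> R) (i j : nat) (y : coord) : R :=
  let r := y 1%nat in let th := y 2%nat in
  let B := b r in let B1 := Derive b r in let B2 := Derive (Derive b) r in
  let P := B1 ^ 2 + B * B2 + 2 * B * B1 / r in
  match i, j with
  | 0%nat, 0%nat => - B ^ 2 * (2 * r * B * B1 + B ^ 2 - 1) / r ^ 2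
  | 1%nat, 1%nat => (2 * r * B * B1 + B ^ 2 - 1) / (r ^ 2 * B ^ 2)
  | 2%nat, 2%nat => r ^ 2 * P
  | 3%nat, 3%nat => sin th ^ 2 * r ^ 2 * P
  | _, _ => 0
  end.

Lemma ein b a c y : Hyp b a c -> Dom a c y -> forall i j, (i < 4)%nat -> (j < 4)%nat ->
  einstein (gmet b) (ginvmet b) i j y = Ein b i j y.
Proof.
  intros HH HD i j Hi Hj.
  destruct (nz_facts b a c y HH HD) as [Hb [Hr Hs]].
  unfold einstein, scalar_curv, sum4.
  rewrite !(ric b a c y HH HD) by lia.
  idx4 i; idx4 j; unfold Ric, Ein, gmet, ginvmet, diag_metric, diag_metric_inv, sss_diag; simpl; field; auto.
Qed.

Definition Ef (k l : nat) (f0 f1 f2 r th : R) : R :=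
  match k, l with
  | 0%nat, 0%nat => - f0 * (r * f1 + f0 - 1) / r ^ 2
  | 1%nat, 1%nat => (r * f1 + f0 - 1) / (r ^ 2 * f0)
  | 2%nat, 2%nat => r ^ 2 * (f2 / 2 + f1 / r)
  | 3%nat, 3%nat => sin th ^ 2 * r ^ 2 * (f2 / 2 + f1 / r)
  | _, _ => 0
  end.

Definition TKf (q k1 k2 : R) (k l : nat) (f0 r th : R) : R :=
  match k, l with
  | 0%nat, 0%nat => q ^ 2 * f0 / r ^ 4 - f0 * (k1 + k2 * r ^ 2)
  | 1%nat, 1%nat => - q ^ 2 / (r ^ 4 * f0) + (k1 + k2 * r ^ 2) / f0
  | 2%nat, 2%nat => q ^ 2 / r ^ 2 + (k1 + 2 * k2 * r ^ 2) * r ^ 2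
  | 3%nat, 3%nat => sin th ^ 2 * (q ^ 2 / r ^ 2 + (k1 + 2 * k2 * r ^ 2) * r ^ 2)
  | _, _ => 0
  end.

Lemma ein_f b a c y : Hyp b a c -> Dom a c y -> forall i j, (i < 4)%nat -> (j < 4)%nat ->
  einstein (gmet b) (ginvmet b) i j y =
  Ef i j (b (y 1%nat) ^ 2) (2 * b (y 1%nat) * Derive b (y 1%nat))
     (2 * Derive b (y 1%nat) ^ 2 + 2 * b (y 1%nat) * Derive (Derive b) (y 1%nat))
     (y 1%nat) (y 2%nat).
Proof.
  intros HH HD i j Hi Hj.
  destruct (nz_facts b a c y HH HD) as [Hb [Hr Hs]].
  rewrite (ein b a c y HH HD) by lia.
  idx4 i; idx4 j; unfold Ein, Ef; simpl; field; auto.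
Qed.

Lemma tk_f b a c y q k1 k2 : Hyp b a c -> Dom a c y -> forall i j, (i < 4)%nat -> (j < 4)%nat ->
  Tem q b i j y + Kckg k1 k2 b i j y = TKf q k1 k2 i j (b (y 1%nat) ^ 2) (y 1%nat) (y 2%nat).
Proof.
  intros HH HD i j Hi Hj.
  destruct (nz_facts b a c y HH HD) as [Hb [Hr Hs]].
  idx4 i; idx4 j; unfold Tem, Kckg, ucov, chicov, gmet, diag_metric, sss_diag, TKf; simpl; field; auto.
Qed.

Lemma loc_int a c r : a < r -> Rbar_lt r c -> locally r (fun s => a < s /\ Rbar_lt s c).
Proof.
  intros H1 H2. apply filter_and; [apply (open_gt a); exact H1 | exact (open_Rbar_lt' _ _ H2)].
Qed.

Definition Fm (M q k1 k2 s : R) := 1 - 2 * M / s + k1 / 3 * s ^ 2 + q ^ 2 / s ^ 2 + k2 / 5 * s ^ 4.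
Definition F1 (M q k1 k2 s : R) := 2 * M / s ^ 2 + 2 * k1 * s / 3 - 2 * q ^ 2 / s ^ 3 + 4 * k2 * s ^ 3 / 5.
Definition F2 (M q k1 k2 s : R) := - 4 * M / s ^ 3 + 2 * k1 / 3 + 6 * q ^ 2 / s ^ 4 + 12 * k2 * s ^ 2 / 5.

Lemma back b a c q k1 k2 M : Hyp b a c ->
  (forall r, a < r -> Rbar_lt r c -> b r ^ 2 = Fm M q k1 k2 r) ->
  forall x, Dom a c x -> forall k l, (k < 4)%nat -> (l < 4)%nat ->
  einstein (gmet b) (ginvmet b) k l x = Tem q b k l x + Kckg k1 k2 b k l x.
Proof.
  intros HH HF x HD k l Hk Hl.
  destruct (nz_facts b a c x HH HD) as [Hb [Hr Hs]].
  destruct HH as [Ha [Hpos Hder]] eqn:EHH.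
  assert (Hf1 : forall s, a < s -> Rbar_lt s c -> 2 * b s * Derive b s = F1 M q k1 k2 s).
  { intros s H1 H2.
    assert (Hd : ex_derive b s) by exact (Hder 1%nat _ H1 H2).
    assert (Hs0 : s <> 0) by lra.
    transitivity (Derive (fun s => b s ^ 2) s).
    { symmetry; apply is_derive_unique; auto_derive; fixeta b; [auto | ring]. }
    rewrite (Derive_ext_loc _ (Fm M q k1 k2)).
    2: { eapply filter_imp; [| apply (loc_int a c s H1 H2)]. intros t [Ht1 Ht2]. apply HF; auto. }
    apply is_derive_unique; unfold Fm, F1; auto_derive; [side | field; auto]. }
  assert (Hf2 : forall s, a < s -> Rbar_lt s c ->
     2 * Derive b s ^ 2 + 2 * b s * Derive (Derive b) s = F2 M q k1 k2 s).
  { intros s H1 H2.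
    assert (Hd : ex_derive b s) by exact (Hder 1%nat _ H1 H2).
    assert (Hd2 : ex_derive (Derive b) s) by exact (Hder 2%nat _ H1 H2).
    assert (Hs0 : s <> 0) by lra.
    transitivity (Derive (fun s => 2 * b s * Derive b s) s).
    { symmetry; apply is_derive_unique; auto_derive; fixeta b; [side | ring]. }
    rewrite (Derive_ext_loc _ (F1 M q k1 k2)).
    2: { eapply filter_imp; [| apply (loc_int a c s H1 H2)]. intros t [Ht1 Ht2]. apply Hf1; auto. }
    apply is_derive_unique; unfold F1, F2; auto_derive; [side | field; auto]. }
  destruct HD as [H1 [H2 H3]] eqn:EHD.
  rewrite (ein_f b a c x HH HD) by lia.
  rewrite (tk_f b a c x q k1 k2 HH HD) by lia.
  rewrite (Hf1 _ H1 H2), (Hf2 _ H1 H2).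
  pose proof (HF _ H1 H2) as H0.
  assert (HM : M = (1 - b (x 1%nat) ^ 2 + k1 / 3 * x 1%nat ^ 2 + q ^ 2 / x 1%nat ^ 2
                     + k2 / 5 * x 1%nat ^ 4) * x 1%nat / 2).
  { rewrite H0; unfold Fm; field; auto. }
  rewrite HM.
  idx4 k; idx4 l; unfold Ef, TKf, F1, F2; simpl; field; auto.
Qed.

Definition ptx (r : R) : coord := fun j => if Nat.eqb j 2 then PI / 2 else r.

Lemma fwd b a c q k1 k2 : Hyp b a c -> Rbar_lt a c ->
  (forall x : coord, a < x 1%nat -> Rbar_lt (x 1%nat) c -> 0 < x 2%nat < PI ->
      forall k l : nat, (k < 4)%nat -> (l < 4)%nat ->
      einstein (gmet b) (ginvmet b) k l x = Tem q b k l x + Kckg k1 k2 b k l x) ->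
  exists M, forall r, a < r -> Rbar_lt r c -> b r ^ 2 = Fm M q k1 k2 r.
Proof.
  intros HH Hac Heq.
  destruct HH as [Ha [Hpos Hder]] eqn:EHH.
  assert (Hrel : forall r, a < r -> Rbar_lt r c ->
    r * (2 * b r * Derive b r) + b r ^ 2 - 1 = - q ^ 2 / r ^ 2 + k1 * r ^ 2 + k2 * r ^ 4).
  { intros r H1 H2.
    assert (HD : Dom a c (ptx r)).
    { unfold Dom, ptx; simpl. pose proof PI_RGT_0. repeat split; auto; lra. }
    destruct (nz_facts b a c (ptx r) HH HD) as [Hb [Hr Hs]].
    pose proof (Heq (ptx r) (proj1 HD) (proj1 (proj2 HD)) (proj2 (proj2 HD)) 1%nat 1%nat ltac:(lia) ltac:(lia)) as E.
    rewrite (ein_f b a c _ HH HD) in E by lia.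
    rewrite (tk_f b a c _ q k1 k2 HH HD) in E by lia.
    change (ptx r 1%nat) with r in E, Hb, Hr. change (ptx r 2%nat) with (PI / 2) in E.
    unfold Ef, TKf in E; cbv beta iota in E.
    assert (Hb2 : b r ^ 2 <> 0) by (apply pow_nonzero; auto).
    replace (r * (2 * b r * Derive b r) + b r ^ 2 - 1) with
      ((r ^ 2 * b r ^ 2) * ((r * (2 * b r * Derive b r) + b r ^ 2 - 1) / (r ^ 2 * b r ^ 2)))
      by (field; auto).
    rewrite E. field; auto. }
  set (H := fun s => s * b s ^ 2 - s - k1 * s ^ 3 / 3 - q ^ 2 / s - k2 * s ^ 5 / 5).
  assert (HdH : forall s, a < s -> Rbar_lt s c -> is_derive H s 0).
  { intros s H1 H2.
    assert (Hd : ex_derive b s) by exact (Hder 1%nat _ H1 H2).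
    assert (Hs0 : s <> 0) by lra.
    assert (Hd0 : is_derive H s ((s * (2 * b s * Derive b s) + b s ^ 2 - 1)
                     - (- q ^ 2 / s ^ 2 + k1 * s ^ 2 + k2 * s ^ 4))).
    { unfold H; auto_derive; fixeta b; [side | field; auto]. }
    rewrite (Hrel s H1 H2) in Hd0. replace 0 with (- q ^ 2 / s ^ 2 + k1 * s ^ 2 + k2 * s ^ 4 - (- q ^ 2 / s ^ 2 + k1 * s ^ 2 + k2 * s ^ 4)) by ring. exact Hd0. }
  assert (Hconst : forall r0 r, a < r0 -> Rbar_lt r0 c -> a < r -> Rbar_lt r c -> H r = H r0).
  { intros r0 r H01 H02 H1 H2.
    assert (Hin : forall y, Rmin r0 r <= y <= Rmax r0 r -> a < y /\ Rbar_lt y c).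
    { intros y [Hy1 Hy2]. unfold Rmin, Rmax in *. destruct (Rle_dec r0 r);
      destruct c as [c'| |]; simpl in *; split; try lra; auto. }
    destruct (MVT_gen H r0 r (fun _ => 0)) as [z [_ Hz]].
    - intros y Hy. destruct (Hin y) as [Hy1 Hy2]; [lra|]. apply HdH; auto.
    - intros y Hy. destruct (Hin y Hy) as [Hy1 Hy2].
      apply derivable_continuous_pt. exists 0. apply is_derive_Reals. apply HdH; auto.
    - lra. }
  assert (Hr0 : exists r0, a < r0 /\ Rbar_lt r0 c).
  { destruct c as [c'| |]; simpl in *.
    - exists ((a + c') / 2); split; simpl; lra.
    - exists (a + 1); split; simpl; auto; lra.
    - contradiction. }
  destruct Hr0 as [r0 [H01 H02]].
  exists (- H r0 / 2).
  intros r H1 H2.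
  rewrite <- (Hconst r0 r H01 H02 H1 H2).
  assert (Hs0 : r <> 0) by lra.
  unfold Fm, H. field; auto.
Qed.

Theorem proposition14 (b : R -> R) (a : R) (c : Rbar)
  (kappa1 kappa2 q Lambda lambda : R) :
  0 <= a -> Rbar_lt a c ->
  (forall r, a < r -> Rbar_lt r c -> 0 < b r) ->
  (forall (n : nat) r, a < r -> Rbar_lt r c -> ex_derive_n b n r) ->
  Lambda = - kappa1 -> lambda = - kappa2 ->
  ((forall x : coord, a < x 1%nat -> Rbar_lt (x 1%nat) c ->
      0 < x 2%nat < PI ->
      forall k l : nat, (k < 4)%nat -> (l < 4)%nat ->
      einstein (gmet b) (ginvmet b) k l x
        = Tem q b k l x + Kckg kappa1 kappa2 b k l x)
   <->
   exists M : R, forall r, a < r -> Rbar_lt r c ->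
     (b r) ^ 2 = 1 - 2 * M / r - Lambda / 3 * r ^ 2 + q ^ 2 / r ^ 2
                 - lambda / 5 * r ^ 4).
Proof.
  intros Ha Hac Hpos Hder HL Hl.
  assert (HH : Hyp b a c) by (repeat split; auto).
  subst Lambda lambda.
  split.
  - intros Heq. destruct (fwd b a c q kappa1 kappa2 HH Hac Heq) as [M HM].
    exists M. intros r H1 H2. rewrite (HM r H1 H2). unfold Fm. field.
    intro; subst; lra.
  - intros [M HM] x H1 H2 H3 k l Hk Hl.
    apply (back b a c q kappa1 kappa2 M HH); auto.
    + intros r Hr1 Hr2. rewrite (HM r Hr1 Hr2). unfold Fm. field. intro; subst; lra.
    + repeat split; auto; lra.
Qed.
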